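(* Let $v_0=(q^c-1)(q^b+q^{b-1}-1)$. For all integers $v\ge v_0$ and $s,t\ge0$, $$\#\Omega_{v,0,s,t}=1-g+v+q^{b-1}s+(q-1)t.$$
   Context: $q$ is a power of a prime $p$, $b\ge1$ an integer, $a=b+1$, $c=a+b$, $N_k=(q^k-1)/(q-1)$, and $g=\frac12\big((q^c-2)(q^{a-1}+q^{b-1}-2)+(q^c-q)\big)$. For integers $v,r,s,t$: $\Omega_{v,r,s,t}=\{(i,j,k)\in\mathbb{Z}^3:\ -v\le i,\ -r\le i+(q^c-1)k<-r+(q^c-1),\ -s\le -q^ai+(q^c-1)j<(q^c-1)-s,\ -t\le q^{a-1}N_bi-q^{b-1}N_cj-(q^{a-1}-1)N_ck\}$. *)

(* Defs.v *)
From HB Require Import structures.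
From mathcomp Require Import all_boot all_order all_algebra.
Set Implicit Arguments. Unset Strict Implicit. Unset Printing Implicit Defensive.
Import Order.TTheory GRing.Theory Num.Theory.
Local Open Scope ring_scope.

Definition prime_power (q : nat) : Prop :=
  exists p n : nat, prime p /\ (0 < n)%N /\ q = (p ^ n)%N.

Definition Nk (q k : nat) : int :=
  ((q%:Z ^+ k - 1) %/ (q%:Z - 1))%Z.

Definition genus (q b : nat) : int :=
  let a := b.+1 in let c := (a + b)%N in
  (((q%:Z ^+ c - 2) * (q%:Z ^+ a.-1 + q%:Z ^+ b.-1 - 2) + (q%:Z ^+ c - q%:Z))
     %/ 2)%Z.

Definition Omega (q b : nat) (v r s t : int) (x : int * int * int) : Prop :=
  let a := b.+1 in let c := (a + b)%N in
  let Q := q%:Z ^+ c - 1 in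
  let: (i, j, k) := x in
  [/\ - v <= i,
      - r <= i + Q * k /\ i + Q * k < - r + Q,
      - s <= - (q%:Z ^+ a) * i + Q * j /\ - (q%:Z ^+ a) * i + Q * j < Q - s
    & - t <= q%:Z ^+ a.-1 * Nk q b * i - q%:Z ^+ b.-1 * Nk q c * j
              - (q%:Z ^+ a.-1 - 1) * Nk q c * k].

Definition card_is (P : int * int * int -> Prop) (n : int) : Prop :=
  exists l : seq (int * int * int),
    [/\ uniq l, (forall x, x \in l <-> P x) & (size l)%:Z = n].

(* Main.v *)
Require Import Defs.
From HB Require Import structures.
From mathcomp Require Import all_boot all_order all_algebra.
From mathcomp Require Import ring lra zify.
Import Order.TTheory GRing.Theory Num.Theory.
Local Open Scope ring_scope.

Lemma divz_uniq (d y w : int) : 0 < d -> d * y <= w -> w < d * y + d -> (w %/ d)%Z = y.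
Proof.
move=> d0 h1 h2.
have -> : w = y * d + (w - y * d) by ring.
rewrite divzMDl ?gt_eqF // divz_small ?addr0 //.
rewrite gtz0_abs //; apply/andP; split; lia.
Qed.

Lemma sum_mod_perm (M : nat) (A c u w : int) : (0 < M)%N -> u * A + w * M%:Z = 1 ->
  \sum_(r < M) ((A * (r : nat)%:Z + c) %% M%:Z)%Z = \sum_(r < M) ((r : nat)%:Z).
Proof.
move=> M0 bez.
have M0' : (0 : int) < M%:Z by rewrite ltz_nat.
have hlt : forall r : 'I_M, (absz ((A * (r : nat)%:Z + c) %% M%:Z)%Z < M)%N.
  move=> r; have := ltz_pmod (A * (r : nat)%:Z + c) M0'.
  have := modz_ge0 (A * (r : nat)%:Z + c) (lt0r_neq0 M0').
  move=> h0 h1; rewrite -ltz_nat gez0_abs //.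
pose h := fun r : 'I_M => Ordinal (hlt r).
have hE : forall r, ((h r : nat)%:Z) = ((A * (r : nat)%:Z + c) %% M%:Z)%Z.
  by move=> r; rewrite /= gez0_abs // modz_ge0 // lt0r_neq0.
have hinj : injective h.
  move=> r1 r2 /(congr1 (fun x : 'I_M => (x : nat)%:Z)); rewrite !hE => e.
  have e1 := divz_eq (A * (r1 : nat)%:Z + c) M%:Z.
  have e2 := divz_eq (A * (r2 : nat)%:Z + c) M%:Z.
  set K1 := ((A * (r1 : nat)%:Z + c) %/ M%:Z)%Z in e1.
  set K2 := ((A * (r2 : nat)%:Z + c) %/ M%:Z)%Z in e2.
  have ex : A * ((r1 : nat)%:Z - (r2 : nat)%:Z) = M%:Z * (K1 - K2).
    move: e1 e2; rewrite e; move=> e1 e2.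
    have : A * (r1 : nat)%:Z - A * (r2 : nat)%:Z = (K1 - K2) * M%:Z.
      by rewrite mulrBl; lra.
    move=> H; rewrite mulrBr H; ring.
  have ex2 : ((r1 : nat)%:Z - (r2 : nat)%:Z) = M%:Z * (u * (K1 - K2) + w * ((r1 : nat)%:Z - (r2 : nat)%:Z)).
    transitivity ((u * A + w * M%:Z) * ((r1 : nat)%:Z - (r2 : nat)%:Z)); first by rewrite bez mul1r.
    by rewrite mulrDl -mulrA ex; ring.
  set z := (u * (K1 - K2) + w * ((r1 : nat)%:Z - (r2 : nat)%:Z)) in ex2.
  have l1 := ltn_ord r1; have l2 := ltn_ord r2.
  apply: val_inj => /=.
  have : z = 0.
    have : (r1 : nat)%:Z < M%:Z by rewrite ltz_nat.
    have : (r2 : nat)%:Z < M%:Z by rewrite ltz_nat.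
    have : (0:int) <= (r1 : nat)%:Z by [].
    have : (0:int) <= (r2 : nat)%:Z by [].
    nia.
  move=> z0; move: ex2; rewrite z0 mulr0 => /eqP; rewrite subr_eq0 eqz_nat => /eqP.
  done.
rewrite [RHS](reindex_inj hinj) /=; apply: eq_bigr => r _; by rewrite hE.
Qed.
Lemma sum_periodic (M n : nat) (F : nat -> int) : (forall r, F (r + M)%N = F r) ->
  \sum_(0 <= r < n * M) F r = n%:Z * \sum_(0 <= r < M) F r.
Proof.
move=> per.
have perN : forall k r, F (r + k * M)%N = F r.
  elim=> [|k IH] r; first by rewrite mul0n addn0.
  by rewrite mulSnr addnA per IH.
elim: n => [|n IH]; first by rewrite mul0n big_geq // mul0r.
rewrite mulSnr (big_cat_nat _ (n:=n*M)) //=; last by rewrite leq_addr.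
rewrite IH -{1}(add0n (n * M)%N) big_addn addKn.
under eq_bigr => i _ do rewrite perN.
by rewrite -[n.+1]addn1 PoszD mulrDl mul1r.
Qed.

Lemma sum_div (M n : nat) (A c u w : int) : (0 < M)%N -> u * A + w * M%:Z = 1 ->
  M%:Z * \sum_(0 <= r < n * M) ((A * r%:Z + c) %/ M%:Z)%Z
  = \sum_(0 <= r < n * M) (A * r%:Z + c) - n%:Z * \sum_(0 <= r < M) r%:Z.
Proof.
move=> M0 bez.
have e : \sum_(0 <= r < n * M) (A * r%:Z + c) =
   \sum_(0 <= r < n * M) (((A * r%:Z + c) %/ M%:Z)%Z * M%:Z) +
   \sum_(0 <= r < n * M) ((A * r%:Z + c) %% M%:Z)%Z.
  by rewrite -big_split /=; apply: eq_bigr => r _; rewrite -divz_eq.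
have hm : \sum_(0 <= r < n * M) ((A * r%:Z + c) %% M%:Z)%Z = n%:Z * \sum_(0 <= r < M) r%:Z.
  rewrite sum_periodic; last first.
    move=> r; rewrite PoszD.
    have -> : A * (r%:Z + M%:Z) + c = A * M%:Z + (A * r%:Z + c) by ring.
    exact: modzMDl.
  by rewrite big_mkord (@sum_mod_perm M A c u w M0 bez) big_mkord.
rewrite e hm -mulr_suml.
by rewrite mulrC addrK.
Qed.

Lemma sum_id2 (M : nat) : 2 * \sum_(0 <= r < M) (r%:Z) = M%:Z * (M%:Z - 1).
Proof.
elim: M => [|M IH]; first by rewrite big_geq.
rewrite big_nat_recr //= mulrDr IH -[M.+1]addn1 PoszD; ring.
Qed.

Ltac to_rat h1 h2 :=
  apply: (@intr_inj rat);
  rewrite !(rmorphD, rmorphB, rmorphM, rmorphXn, rmorphN, rmorph1) /= ?h1 ?h2; field; try assumption.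

Section Main.
Variables (qz Y Nb Nc v s t : int).
Hypothesis hq : 2 <= qz.
Hypothesis hY : 1 <= Y.
Hypothesis hNb : (qz - 1) * Nb = qz * Y - 1.
Hypothesis hNc : Nc = Nb * (1 + qz ^+ 2 * Y) + qz * Y.
Hypothesis hv : (qz ^+ 3 * Y ^+ 2 - 1) * (qz * Y + Y - 1) <= v.
Hypothesis hs : 0 <= s.
Hypothesis ht : 0 <= t.

Let Q := qz ^+ 3 * Y ^+ 2 - 1.
Let A := qz ^+ 2 * Y.
Let B := qz * Y * Nb.
Let J (i : int) := - ((s - A * i) %/ Q)%Z.
Let K (i : int) := - (i %/ Q)%Z.
Let hi (r : int) := ((B * r + t) %/ Nc)%Z - Y * J r.
Let lo (r : int) := - ((v + r) %/ Q)%Z.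

Let hq' : (qz%:~R : rat) - 1 != 0.
Proof. rewrite -[1 : rat]/((1 : int)%:~R) -intrB intr_eq0 subr_eq0; lia. Qed.

Let hNb' : (Nb%:~R : rat) = ((qz%:~R) * Y%:~R - 1) / (qz%:~R - 1).
Proof.
apply: (mulfI hq'); rewrite [RHS]mulrC divfK //.
have := congr1 (fun x : int => (x%:~R : rat)) hNb.
rewrite /= !(rmorphD, rmorphB, rmorphM, rmorphXn, rmorphN, rmorph1) /=.
by move=> ->.
Qed.

Let hNc' : (Nc%:~R : rat) = Nb%:~R * (1 + qz%:~R ^+ 2 * Y%:~R) + qz%:~R * Y%:~R.
Proof. by rewrite hNc !(rmorphD, rmorphB, rmorphM, rmorphXn, rmorphN, rmorph1). Qed.

Let Nb_pos : 1 <= Nb.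
Proof. nia. Qed.

Let Nc_pos : 1 <= Nc.
Proof. rewrite hNc. nia. Qed.

Let Q_pos : 1 <= Q.
Proof. rewrite /Q. nia. Qed.

Let QE : Q = (qz - 1) * Nc.
Proof. rewrite /Q; to_rat hNc' hNb'. Qed.

Let F1 i k : (0 <= i + Q * k /\ i + Q * k < Q) <-> k = K i.
Proof.
split.
- case=> h1 h2; rewrite /K (@divz_uniq Q (- k) i) ?opprK //; lia.
- move=> ->; rewrite /K.
  have e : i + Q * - (i %/ Q)%Z = (i %% Q)%Z by have := divz_eq i Q; lra.
  rewrite e; split; [apply: modz_ge0; lia | apply: ltz_pmod; lia].
Qed.

Let F2 i j : (- s <= - A * i + Q * j /\ - A * i + Q * j < Q - s) <-> j = J i.
Proof.
split.
- case=> h1 h2; rewrite /J (@divz_uniq Q (- j)) ?opprK //; lia.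
- move=> ->; rewrite /J.
  have e : - A * i + Q * - ((s - A * i) %/ Q)%Z = ((s - A * i) %% Q)%Z - s.
    by have := divz_eq (s - A * i) Q; lra.
  have := modz_ge0 (s - A * i) (lt0r_neq0 (lt_le_trans ltr01 Q_pos)).
  have := @ltz_pmod (s - A * i) Q ltac:(lia).
  rewrite e; lia.
Qed.

Let Qne0 : Q != 0.
Proof. apply: lt0r_neq0; lia. Qed.

Let F3 m r : J (Q * m + r) = A * m + J r.
Proof.
rewrite /J.
have -> : s - A * (Q * m + r) = (- A * m) * Q + (s - A * r) by ring.
by rewrite divzMDl //; ring.
Qed.

Let F3K m r : 0 <= r -> r < Q -> K (Q * m + r) = - m.
Proof.
move=> r0 rQ; rewrite /K mulrC divzMDl // divz_small ?addr0 //.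
rewrite gtz0_abs; [lia | lia].
Qed.

Let F4 m r : 0 <= r -> r < Q ->
  qz * Y * Nb * (Q * m + r) - Y * Nc * J (Q * m + r) - (qz * Y - 1) * Nc * K (Q * m + r)
  = - Nc * m + B * r - Y * Nc * J r.
Proof.
move=> r0 rQ; rewrite F3 F3K //; move: (J r) => x.
rewrite /B /Q /A; to_rat hNc' hNb'.
Qed.

Let F5 m r : (- t <= - Nc * m + B * r - Y * Nc * J r) <-> m <= hi r.
Proof.
have -> : hi r = ((B * r + t - Y * Nc * J r) %/ Nc)%Z.
  have -> : B * r + t - Y * Nc * J r = (- (Y * J r)) * Nc + (B * r + t) by ring.
  rewrite divzMDl; last by apply: lt0r_neq0; lia.
  by rewrite /hi; ring.
rewrite lez_divRL; last lia.
split; lia.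
Qed.

Let F6 m r : (- v <= Q * m + r) <-> lo r <= m.
Proof.
rewrite /lo.
have -> : (- ((v + r) %/ Q)%Z <= m) = (- m <= ((v + r) %/ Q)%Z) by rewrite lerNl.
rewrite lez_divRL; last lia.
split; lia.
Qed.

Let F7 r : 0 <= r -> r < Q -> lo r <= hi r + 1.
Proof.
move=> r0 rQ.
set D := ((v + r) %/ Q)%Z.
set F := ((B * r + t) %/ Nc)%Z.
have a : qz * Y + Y - 1 <= D.
  rewrite /D lez_divRL; last lia.
  have : Q * (qz * Y + Y - 1) <= v by [].
  lia.
have c1 : Q * J r < A * r - s + Q.
  rewrite /J.
  have := @ltz_ceil (s - A * r) Q ltac:(lia).
  lia.
have c2 : Y * (Q * J r) < Y * (A * r - s + Q) by rewrite ltr_pM2l //; lia.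
have c3 : 0 <= Y * s by apply: mulr_ge0; lia.
have c4 : B * r < (F + 1) * Nc.
  have := @ltz_ceil (B * r + t) Nc ltac:(lia).
  rewrite -/F; lia.
have c5 : (qz - 1) * (B * r) < Q * (F + 1).
  rewrite QE -mulrA ltr_pM2l; last lia.
  by rewrite [Nc * _]mulrC.
have c6 : (qz - 1) * (B * r) = qz * Y * (qz * Y - 1) * r.
  by rewrite /B -hNb; ring.
have c7 : qz * Y * r < qz * Y * Q by rewrite ltr_pM2l //; apply: mulr_gt0; lia.
have b : Y * J r <= F + qz * Y + Y.
  have : Q * (Y * J r) < Q * (F + qz * Y + Y + 1).
    have e1 : Q * (Y * J r) = Y * (Q * J r) by ring.
    have e2 : Y * A * r = qz * Y * (qz * Y) * r by rewrite /A; ring.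
    rewrite e1. 
    have : Y * (A * r - s + Q) = Y * A * r - Y * s + Y * Q by ring.
    timeout 30 lra.
  rewrite ltr_pM2l; last lia.
  timeout 30 lia.
rewrite /lo /hi -/D -/F; timeout 30 lia.
Qed.

Let Qn := absz Q.
Let QnE : Qn%:Z = Q.
Proof. rewrite /Qn gez0_abs //; lia. Qed.

Let len (r : nat) := absz (hi r%:Z - lo r%:Z + 1).
Let lenE (r : nat) : (r < Qn)%N -> (len r)%:Z = hi r%:Z - lo r%:Z + 1.
Proof.
move=> rQ; rewrite /len gez0_abs //.
have : r%:Z < Q by rewrite -QnE ltz_nat.
move=> h; have h0 : (0 : int) <= r%:Z by []. have := F7 (r%:Z) h0 h; lia.
Qed.

Let T (i : int) : int * int * int := (i, J i, K i).

Let L := [seq T (Q * (lo r%:Z + n%:Z) + r%:Z) | r <- iota 0 Qn, n <- iota 0 (len r)].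

Let Om (x : int * int * int) : Prop :=
  let: (i, j, k) := x in
  [/\ - v <= i, 0 <= i + Q * k /\ i + Q * k < Q,
      - s <= - A * i + Q * j /\ - A * i + Q * j < Q - s
    & - t <= qz * Y * Nb * i - Y * Nc * j - (qz * Y - 1) * Nc * k].

Let memL x : x \in L <-> Om x.
Proof.
split.
- move/allpairsPdep => [r [n [hr hn ->]]].
  move: hr hn; rewrite !mem_iota !add0n => /andP[_ hr] /andP[_ hn].
  have hrQ : r%:Z < Q by rewrite -QnE ltz_nat.
  have hr0 : (0 : int) <= r%:Z by [].
  set m := lo r%:Z + n%:Z.
  rewrite /T /Om; split.
  + by apply/F6; rewrite /m; lia.
  + by apply/F1.
  + by apply/F2.
  + rewrite F4 //; apply/F5.
    have := lenE r hr; rewrite -ltz_nat in hn; rewrite /m; lia.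
- case: x => [[i j] k] [h1 h2 h3 h4].
  have ek := (F1 i k).1 h2; have ej := (F2 i j).1 h3.
  set r := (i %% Q)%Z; set m := (i %/ Q)%Z.
  have ei : i = Q * m + r by rewrite /r /m mulrC -divz_eq.
  have r0 : 0 <= r by apply: modz_ge0.
  have rQ : r < Q by apply: ltz_pmod; lia.
  have hlo : lo r <= m by apply/F6; rewrite -ei.
  have hhi : m <= hi r by apply/F5; rewrite -F4 // -ei -ej -ek.
  apply/allpairsPdep; exists (absz r), (absz (m - lo r)).
  have er : (absz r)%:Z = r by rewrite gez0_abs.
  have en : (absz (m - lo r))%:Z = m - lo r by rewrite gez0_abs //; lia.
  split.
  + rewrite mem_iota add0n /=; rewrite -ltz_nat er QnE //.
  + rewrite mem_iota add0n /= -ltz_nat en lenE ?er //; first lia.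
    by rewrite -ltz_nat er QnE.
  + rewrite en er.
    have -> : Q * (lo r + (m - lo r)) + r = i by rewrite ei; ring.
    by rewrite /T ej ek.
Qed.

Let uniqL : uniq L.
Proof.
apply: allpairs_uniq_dep; [exact: iota_uniq | by move=> r _; exact: iota_uniq |].
move=> [r1 n1] [r2 n2] /allpairsPdep [x1 [y1 [hx1 _ e1]]] /allpairsPdep [x2 [y2 [hx2 _ e2]]].
move: e1 e2 => [-> ->] [-> ->] {r1 n1 r2 n2} /=.
move: hx1 hx2; rewrite !mem_iota !add0n => /andP[_ h1] /andP[_ h2].
rewrite /T => -[e] _ _.
have m1 : ((Q * (lo x1%:Z + y1%:Z) + x1%:Z) %% Q)%Z = x1%:Z.
  rewrite mulrC modzMDl modz_small //; apply/andP; split => //.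
  by rewrite -QnE ltz_nat.
have m2 : ((Q * (lo x2%:Z + y2%:Z) + x2%:Z) %% Q)%Z = x2%:Z.
  rewrite mulrC modzMDl modz_small //; apply/andP; split => //.
  by rewrite -QnE ltz_nat.
have ex : x1 = x2 by apply/eqP; rewrite -eqz_nat -m1 -m2 e.
subst x2.
have : Q * y1%:Z = Q * y2%:Z.
  move: e; rewrite !mulrDr => e; lra.
move/(mulfI Qne0)/eqP; rewrite eqz_nat => /eqP ->.
done.
Qed.

Let sizeL : (size L)%:Z = \sum_(0 <= r < Qn) (hi r%:Z - lo r%:Z + 1).
Proof.
rewrite size_allpairs_dep.
have sE : forall l : seq nat, (sumn l)%:Z = \sum_(x <- l) x%:Z.
  by elim=> [|x l IH]; rewrite ?big_nil ?big_cons //= PoszD IH.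
rewrite sE big_map /index_iota subn0 big_seq [RHS]big_seq.
apply: eq_bigr => r; rewrite mem_iota add0n => /andP[_ hr].
by rewrite size_iota lenE.
Qed.

Let sumlin (N : nat) (a c : int) :
  \sum_(0 <= r < N) (a * r%:Z + c) = a * \sum_(0 <= r < N) r%:Z + N%:Z * c.
Proof.
by rewrite big_split /= -mulr_sumr sumr_const_nat subn0 -mulr_natr natz [c * _]mulrC.
Qed.

Let Ncn := absz Nc.
Let NcnE : Ncn%:Z = Nc.
Proof. rewrite /Ncn gez0_abs //; lia. Qed.
Let qn := absz (qz - 1).
Let qnE : qn%:Z = qz - 1.
Proof. rewrite /qn gez0_abs //; lia. Qed.
Let QnM : Qn = (qn * Ncn)%N.
Proof. by apply/eqP; rewrite -eqz_nat PoszM qnE NcnE QnE QE. Qed.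

Let toQ (a x y : int) : a != 0 -> a * x = y -> (x%:~R : rat) = y%:~R / a%:~R.
Proof.
move=> a0 e; have a0' : (a%:~R : rat) != 0 by rewrite intr_eq0.
by rewrite -e rmorphM /= mulrC mulKf.
Qed.

Let total : \sum_(0 <= r < Qn) (hi r%:Z - lo r%:Z + 1) =
  1 - (((qz ^+ 3 * Y ^+ 2 - 2) * (qz * Y + Y - 2) + (qz ^+ 3 * Y ^+ 2 - qz)) %/ 2)%Z
  + v + Y * s + (qz - 1) * t.
Proof.
set W := \sum_(0 <= r < Qn) ((B * r%:Z + t) %/ Nc)%Z.
set U := \sum_(0 <= r < Qn) ((- A * r%:Z + s) %/ Q)%Z.
set H := \sum_(0 <= r < Qn) ((1 * r%:Z + v) %/ Q)%Z.
set S1 := \sum_(0 <= r < Qn) r%:Z.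
set S2 := \sum_(0 <= r < Ncn) r%:Z.
have eT : \sum_(0 <= r < Qn) (hi r%:Z - lo r%:Z + 1) = W + Y * U + H + Q.
  have pw : forall r : nat, hi r%:Z - lo r%:Z + 1 =
     ((B * r%:Z + t) %/ Nc)%Z + Y * ((- A * r%:Z + s) %/ Q)%Z + ((1 * r%:Z + v) %/ Q)%Z + 1.
    move=> r; rewrite /hi /lo /J mul1r.
    have -> : - A * r%:Z + s = s - A * r%:Z by ring.
    have -> : r%:Z + v = v + r%:Z by ring.
    ring.
  rewrite (eq_bigr _ (fun r _ => pw r)) !big_split /= -mulr_sumr sumr_const_nat subn0.
  by rewrite -mulr_natr natz mul1r QnE.
have hW : Nc * W = B * S1 + Q * t - (qz - 1) * S2.
  have bez : (qz ^+ 2 * Y * (- qz - qz ^+ 2 * Y)) * B +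
     (qz ^+ 2 * Y * (qz * Y) + (- (qz - 1)) * (- qz - qz ^+ 2 * Y) * Nb + (- (qz - 1)) * Nc) * Ncn%:Z = 1.
    rewrite NcnE /B; to_rat hNc' hNb'.
  have := @sum_div Ncn qn B t _ _ ltac:(rewrite -ltz_nat NcnE; lia) bez.
  by rewrite -QnM NcnE qnE sumlin QnE.
have hU : Q * U = - A * S1 + Q * s - S1.
  have bez : (- (qz * Y)) * (- A) + (-1) * Qn%:Z = 1 by rewrite QnE /A /Q; ring.
  have := @sum_div Qn 1 (- A) s _ _ ltac:(rewrite -ltz_nat QnE; lia) bez.
  by rewrite !mul1n QnE sumlin QnE mul1r.
have hH : Q * H = Q * v.
  have bez : 1 * 1 + 0 * Qn%:Z = 1 by ring.
  have := @sum_div Qn 1 1 v _ _ ltac:(rewrite -ltz_nat QnE; lia) bez.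
  rewrite !mul1n QnE sumlin QnE mul1r => ->; ring.
have hS1 : 2 * S1 = Q * (Q - 1) by rewrite /S1 sum_id2 QnE.
have hS2 : 2 * S2 = Nc * (Nc - 1) by rewrite /S2 sum_id2 NcnE.
rewrite eT.
set X := 1 + v + Y * s + (qz - 1) * t - (W + Y * U + H + Q).
have hX : (qz ^+ 3 * Y ^+ 2 - 2) * (qz * Y + Y - 2) + (qz ^+ 3 * Y ^+ 2 - qz) = 2 * X.
  have Nc0 : Nc != 0 by apply: lt0r_neq0; lia.
  have two0 : (2 : int) != 0 by [].
  have rW := toQ _ _ _ Nc0 hW; have rU := toQ _ _ _ Qne0 hU; have rH := toQ _ _ _ Qne0 hH.
  have rS1 := toQ _ _ _ two0 hS1; have rS2 := toQ _ _ _ two0 hS2.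
  have Q0' : (Q%:~R : rat) != 0 by rewrite intr_eq0.
  have Nc0' : (Nc%:~R : rat) != 0 by rewrite intr_eq0.
  have rNc : (Nc%:~R : rat) = (qz%:~R ^+ 3 * Y%:~R ^+ 2 - 1) / (qz%:~R - 1).
    apply: (mulfI hq'); rewrite [RHS]mulrC divfK //.
    have := congr1 (fun x : int => (x%:~R : rat)) QE.
    by rewrite /Q /= !(rmorphD, rmorphB, rmorphM, rmorphXn, rmorphN, rmorph1) /= => <-.
  have Q0'' : (qz%:~R ^+ 3 * Y%:~R ^+ 2 - 1 : rat) != 0.
    by move: Q0'; rewrite /Q !(rmorphD, rmorphB, rmorphM, rmorphXn, rmorphN, rmorph1).
  move: Q0' rU rH rS1; rewrite /X /Q /A /B in rW *.
  clearbody W U H S1 S2. move=> Q0' rU rH rS1.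
  apply: (@intr_inj rat).
  rewrite !(rmorphD, rmorphB, rmorphM, rmorphXn, rmorphN, rmorph1) /= rW rU rH.
  rewrite !(rmorphD, rmorphB, rmorphM, rmorphXn, rmorphN, rmorph1) /= rS1 rS2.
  rewrite !(rmorphD, rmorphB, rmorphM, rmorphXn, rmorphN, rmorph1) /=.
  rewrite rNc hNb'; field.
  by rewrite Q0'' hq'.
rewrite hX mulKz //; rewrite /X; ring.
Qed.

Lemma main_abs : exists l : seq (int * int * int),
  [/\ uniq l,
      (forall x, x \in l <->
        (let: (i, j, k) := x in
        [/\ - v <= i,
            0 <= i + (qz ^+ 3 * Y ^+ 2 - 1) * k /\ i + (qz ^+ 3 * Y ^+ 2 - 1) * k < qz ^+ 3 * Y ^+ 2 - 1,
            - s <= - (qz ^+ 2 * Y) * i + (qz ^+ 3 * Y ^+ 2 - 1) * j /\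
              - (qz ^+ 2 * Y) * i + (qz ^+ 3 * Y ^+ 2 - 1) * j < (qz ^+ 3 * Y ^+ 2 - 1) - s
          & - t <= qz * Y * Nb * i - Y * Nc * j - (qz * Y - 1) * Nc * k]))
    & (size l)%:Z = 1 - (((qz ^+ 3 * Y ^+ 2 - 2) * (qz * Y + Y - 2) + (qz ^+ 3 * Y ^+ 2 - qz)) %/ 2)%Z
  + v + Y * s + (qz - 1) * t].
Proof.
exists L; split; [exact: uniqL | exact: memL | by rewrite sizeL total].
Qed.
End Main.


Lemma Nk_mul (q k : nat) : (q%:Z - 1) * Nk q k = q%:Z ^+ k - 1.
Proof.
rewrite /Nk.
have -> : q%:Z ^+ k - 1 = (q%:Z - 1) * \sum_(i < k) (q%:Z ^+ (k.-1 - i) * 1 ^+ i).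
  by rewrite -subrXX expr1n.
case: (eqVneq (q%:Z - 1) 0) => [->|h]; first by rewrite !mul0r.
by rewrite mulKz.
Qed.

Theorem lemma3 (q b : nat) (v s t : int) :
  prime_power q -> (1 <= b)%N ->
  let c := (b.+1 + b)%N in
  (q%:Z ^+ c - 1) * (q%:Z ^+ b + q%:Z ^+ b.-1 - 1) <= v ->
  0 <= s -> 0 <= t ->
  card_is (Omega q b v 0 s t)
    (1 - genus q b + v + q%:Z ^+ b.-1 * s + (q%:Z - 1) * t).
Proof.
move=> [p [n [pp [n0 eqq]]]] hb.
have hq2 : (2 <= q)%N.
  rewrite eqq; apply: (leq_trans (prime_gt1 pp)).
  by rewrite -{1}(expn1 p) leq_pexp2l // prime_gt0.
have hq : (2 : int) <= q%:Z by rewrite lez_nat.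
case: b hb => [//|b'] _ c hv hs ht.
set qz := q%:Z; set Y := qz ^+ b'.
have ec : qz ^+ c = qz ^+ 3 * Y ^+ 2 by rewrite /c /Y -exprM -exprD; congr (_ ^+ _); rewrite /c; clear; lia.
have ea : qz ^+ b'.+2 = qz ^+ 2 * Y by rewrite /Y -exprD; congr (_ ^+ _); rewrite /c; clear; lia.
have eb : qz ^+ b'.+1 = qz * Y by rewrite /Y exprS.
set Nb := Nk q b'.+1; set Nc := Nk q c.
have hNb : (qz - 1) * Nb = qz * Y - 1 by rewrite /Nb Nk_mul -eb.
have hNc : Nc = Nb * (1 + qz ^+ 2 * Y) + qz * Y.
  have q0 : qz - 1 != 0 by rewrite subr_eq0 /qz -[1]/(1%:Z) eqz_nat; apply/eqP => e; move: hq2; rewrite e.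
  apply: (mulfI q0).
  rewrite /Nc Nk_mul -/qz ec.
  have -> : (qz - 1) * (Nb * (1 + qz ^+ 2 * Y) + qz * Y) =
     ((qz - 1) * Nb) * (1 + qz ^+ 2 * Y) + (qz - 1) * (qz * Y) by ring.
  rewrite hNb; ring.
have hY : (1 : int) <= Y by rewrite /Y exprn_ege1 // (le_trans _ hq).
have hv' : (qz ^+ 3 * Y ^+ 2 - 1) * (qz * Y + Y - 1) <= v by rewrite -ec -eb.
have [l [ul ml sl]] := @main_abs qz Y Nb Nc v s t hq hY hNb hNc hv' hs ht.
exists l; split => //.
  move=> [[i j] k]; rewrite ml /Omega /= -/qz -/c ec ea eb -/Y -/Nb -/Nc oppr0 add0r.
  done.
rewrite sl /genus /= -/qz -/c ec eb -/Y.
done.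
Qed.
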